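(* If the probabilistic normed space $(\mathbb{R},\nu,\tau,\tau^* )$ (on the real line) is a topological vector space with respect to its strong topology, then it is strongly complete, i.e. every strongly Cauchy sequence in $\mathbb{R}$ strongly converges to a point of $\mathbb{R}$.
   Context: $\Delta^{+}$ is the set of functions $F:[-\infty,+\infty]\to[0,1]$ that are left-continuous on $\mathbb{R}$, nondecreasing, with $F(0)=0$ and $F(+\infty)=1$, ordered pointwise; $\varepsilon_0$ is the d.f. equal to $0$ for $x\le0$ and $1$ for $x>0$. A triangle function is a map $\tau:\Delta^+\times\Delta^+\to\Delta^+$ that is associative, commutative, nondecreasing in each argument, with unit $\varepsilon_0$. A PN space is a quadruple $(V,\nu,\tau,\tau^* )$ with $V$ a real vector space, $\tau\le\tau^*$ continuous triangle functions, and $\nu:V\to\Delta^+$ such that for all $p,q\in V$: (N1) $\nu_p=\varepsilon_0$ iff $p=\theta$; (N2) $\nu_{-p}=\nu_p$; (N3) $\nu_{p+q}\ge\tau(\nu_p,\nu_q)$; (N4) $\nu_p\le\tau^*(\nu_{\lambda p},\nu_{(1-\lambda)p})$ for all $\lambda\in[0,1]$. The strong topology is generated by the neighborhoods $N_p(\lambda)=\{q\in V:\nu_{p-q}(\lambda)>1-\lambda\}$, $\lambda>0$. A sequence $(p_n)$ strongly converges to $p$ if for every $\lambda>0$ there is $N$ with $p_n\in N_p(\lambda)$ for $n\ge N$; it is strongly Cauchy if for every $\lambda>0$ there is $N$ with $\nu_{p_n-p_m}(\lambda)>1-\lambda$ for all $m,n>N$. *)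

(* Defs.v *)
From Stdlib Require Import Reals.
Open Scope R_scope.

(* A distance distribution function F : [-oo,+oo] -> [0,1] in Delta^+ is
   represented by its restriction to R: the values F(-oo)=0 and F(+oo)=1 are
   forced, so the restriction determines F and the pointwise order on
   [-oo,+oo] coincides with the pointwise order on R. *)
Definition dfun := R -> R.

Definition in_Delta_plus (F : dfun) : Prop :=
  (forall x, 0 <= F x <= 1) /\
  (forall x y, x <= y -> F x <= F y) /\
  (forall x, forall eps, 0 < eps -> exists d, 0 < d /\
       forall y, x - d < y <= x -> Rabs (F y - F x) < eps) /\
  F 0 = 0.

Definition eps0 : dfun := fun x => if Rle_dec x 0 then 0 else 1.

Definition dfeq (F G : dfun) : Prop := forall x, F x = G x.
Definition dfle (F G : dfun) : Prop := forall x, F x <= G x.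

(* weak convergence in Delta^+, i.e. convergence for the (modified Levy /
   Sibley) metric topology of Delta^+ *)
Definition weak_cv (Fn : nat -> dfun) (F : dfun) : Prop :=
  forall x, 0 < x -> continuity_pt F x -> Un_cv (fun n => Fn n x) (F x).

Definition triangle_function (tau : dfun -> dfun -> dfun) : Prop :=
  (forall F G, in_Delta_plus F -> in_Delta_plus G -> in_Delta_plus (tau F G)) /\
  (forall F G H, in_Delta_plus F -> in_Delta_plus G -> in_Delta_plus H ->
     dfeq (tau F (tau G H)) (tau (tau F G) H)) /\
  (forall F G, in_Delta_plus F -> in_Delta_plus G -> dfeq (tau F G) (tau G F)) /\
  (forall F F' G, in_Delta_plus F -> in_Delta_plus F' -> in_Delta_plus G ->
     dfle F F' -> dfle (tau F G) (tau F' G)) /\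
  (forall F, in_Delta_plus F -> dfeq (tau F eps0) F).

(* continuity of tau on Delta^+ x Delta^+ (metrizable, so sequential) *)
Definition tf_continuous (tau : dfun -> dfun -> dfun) : Prop :=
  forall (Fn Gn : nat -> dfun) F G,
    (forall n, in_Delta_plus (Fn n)) -> (forall n, in_Delta_plus (Gn n)) ->
    in_Delta_plus F -> in_Delta_plus G ->
    weak_cv Fn F -> weak_cv Gn G -> weak_cv (fun n => tau (Fn n) (Gn n)) (tau F G).

Definition PN_space_R (nu : R -> dfun) (tau taus : dfun -> dfun -> dfun) : Prop :=
  triangle_function tau /\ triangle_function taus /\
  tf_continuous tau /\ tf_continuous taus /\
  (forall F G, in_Delta_plus F -> in_Delta_plus G -> dfle (tau F G) (taus F G)) /\
  (forall p, in_Delta_plus (nu p)) /\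
  (forall p, dfeq (nu p) eps0 <-> p = 0) /\
  (forall p, dfeq (nu (- p)) (nu p)) /\
  (forall p q, dfle (tau (nu p) (nu q)) (nu (p + q))) /\
  (forall p l, 0 <= l <= 1 -> dfle (nu p) (taus (nu (l * p)) (nu ((1 - l) * p)))).

Definition Nbd (nu : R -> dfun) (p l : R) (q : R) : Prop := nu (p - q) l > 1 - l.

Definition strong_open (nu : R -> dfun) (U : R -> Prop) : Prop :=
  forall p, U p -> exists l, 0 < l /\ forall q, Nbd nu p l q -> U q.

Definition usual_open (U : R -> Prop) : Prop :=
  forall a, U a -> exists e, 0 < e /\ forall b, Rabs (b - a) < e -> U b.

Definition strong_TVS (nu : R -> dfun) : Prop :=
  (forall W, strong_open nu W ->
     forall p q, W (p + q) ->
       exists A B, strong_open nu A /\ strong_open nu B /\ A p /\ B q /\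
         forall a b, A a -> B b -> W (a + b)) /\
  (forall W, strong_open nu W ->
     forall c p, W (c * p) ->
       exists A B, usual_open A /\ strong_open nu B /\ A c /\ B p /\
         forall a b, A a -> B b -> W (a * b)).

Definition strong_cv (nu : R -> dfun) (u : nat -> R) (p : R) : Prop :=
  forall l, 0 < l -> exists N, forall n, (n >= N)%nat -> Nbd nu p l (u n).

Definition strong_Cauchy (nu : R -> dfun) (u : nat -> R) : Prop :=
  forall l, 0 < l -> exists N, forall m n, (m > N)%nat -> (n > N)%nat ->
    nu (u n - u m) l > 1 - l.

Definition strongly_complete (nu : R -> dfun) : Prop :=
  forall u, strong_Cauchy nu u -> exists p, strong_cv nu u p.

(* Main.v *)
Require Import Defs.
From Stdlib Require Import Reals Lra Lia Classical ClassicalEpsilon.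
Open Scope R_scope.

Lemma step_in_Delta (a c : R) : 0 <= a -> 0 <= c <= 1 ->
  in_Delta_plus (fun x => if Rle_dec x a then 0 else c).
Proof.
  intros Ha Hc. split; [|split; [|split]].
  - intro x; destruct (Rle_dec x a); lra.
  - intros x y Hxy; destruct (Rle_dec x a), (Rle_dec y a); lra.
  - intros x eps He. destruct (Rle_dec x a) as [Hx|Hx].
    + exists 1; split; [lra|]. intros y Hy.
      destruct (Rle_dec y a); [|lra]. rewrite Rminus_0_r, Rabs_R0; lra.
    + exists (x - a); split; [lra|]. intros y Hy.
      destruct (Rle_dec y a); [lra|]. unfold Rminus; rewrite Rplus_opp_r, Rabs_R0; lra.
  - destruct (Rle_dec 0 a); lra.
Qed.

Lemma small_inv (x : R) : 0 < x -> exists N, forall n, (n >= N)%nat -> / INR (S n) < x.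
Proof.
  intros Hx. destruct (archimed_cor1 x Hx) as [N [HN HN0]]. exists N. intros n Hn.
  apply Rle_lt_trans with (/ INR N); auto.
  apply Rinv_le_contravar. apply lt_0_INR; lia. apply le_INR; lia.
Qed.

Lemma inv_pos (n : nat) : 0 < / INR (S n).
Proof. apply Rinv_0_lt_compat, lt_0_INR; lia. Qed.

Section S.
Variables (nu : R -> dfun) (tau taus : dfun -> dfun -> dfun).
Hypothesis HPN : PN_space_R nu tau taus.
Hypothesis HTVS : strong_TVS nu.

Lemma nbd_open (q l : R) : 0 < l -> nu q l > 1 - l ->
  exists eta, 0 < eta /\ forall r, nu (q - r) eta > 1 - eta -> nu r l > 1 - l.
Proof.
  destruct HPN as [[TD [_ [_ [Tmono Tunit]]]] [_ [Hc [_ [_ [HD [HN1 [HN2 [HN3 _]]]]]]]]].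
  intros Hl Hq. apply NNPP; intro Hne.
  assert (Hall : forall n : nat, exists r, nu (q - r) (/ INR (S n)) > 1 - / INR (S n)
                  /\ nu r l <= 1 - l).
  { intro n. apply NNPP; intro H1. apply Hne. exists (/ INR (S n)). split; [apply inv_pos|].
    intros r Hr. apply Rnot_le_gt. intro H2. apply H1. exists r; split; auto. }
  set (rs := fun n => proj1_sig (constructive_indefinite_description _ (Hall n))).
  assert (Hrs : forall n, nu (q - rs n) (/ INR (S n)) > 1 - / INR (S n) /\ nu (rs n) l <= 1 - l).
  { intro n. unfold rs. destruct (constructive_indefinite_description _ (Hall n)); auto. }
  destruct (HD q) as [HF01 [HFm [HFl HF0]]].
  destruct (HFl l (nu q l - (1 - l))) as [d [Hd Hdy]]; [lra|].
  set (a := Rmax (l - d/2) (l/2)).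
  assert (Ha1 : l/2 <= a) by apply Rmax_r.
  assert (Ha2 : l - d/2 <= a) by apply Rmax_l.
  assert (Ha3 : a < l) by (unfold a; apply Rmax_lub_lt; lra).
  assert (Hca : nu q a > 1 - l).
  { specialize (Hdy a ltac:(lra)). apply Rabs_def2 in Hdy. lra. }
  set (c := nu q a).
  set (H := fun x => if Rle_dec x a then 0 else c).
  assert (HH : in_Delta_plus H) by (apply step_in_Delta; [lra| apply HF01]).
  assert (He0 : in_Delta_plus eps0) by (apply (step_in_Delta 0 1); lra).
  set (G := fun n => nu (rs n - q)).
  assert (HGsym : forall n y, G n y = nu (q - rs n) y).
  { intros n y. unfold G. rewrite <- HN2. f_equal. f_equal. ring. }
  assert (Hw : weak_cv (fun n => tau H (G n)) (tau H eps0)).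
  { apply Hc; auto. all: try (intro; unfold G; apply HD).
    - intros x _ _ eps Heps. exists 0%nat. intros. unfold Rdist. rewrite Rminus_eq_0, Rabs_R0; lra.
    - intros x Hx _ eps Heps.
      destruct (small_inv (Rmin x eps)) as [N HN]; [apply Rmin_glb_lt; lra|].
      exists N. intros n Hn. specialize (HN n Hn).
      assert (Hm1 : Rmin x eps <= x) by apply Rmin_l.
      assert (Hm2 : Rmin x eps <= eps) by apply Rmin_r.
      unfold eps0. destruct (Rle_dec x 0); [lra|].
      destruct (Hrs n) as [Hr1 _].
      destruct (HD (rs n - q)) as [H01 [Hm _]].
      assert (G n (/ INR (S n)) <= G n x) by (apply Hm; lra).
      rewrite HGsym in H0. specialize (H01 x). fold (G n) in H01.
      unfold Rdist. rewrite Rabs_left1; lra. }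
  assert (Hcont : continuity_pt (tau H eps0) l).
  { unfold continuity_pt, continue_in, limit1_in, limit_in. intros eps Heps.
    exists (l - a). split; [lra|]. intros x [_ Hx]. simpl in *. unfold Rdist in *.
    rewrite !Tunit by auto. unfold H.
    apply Rabs_def2 in Hx.
    destruct (Rle_dec x a); [lra|]. destruct (Rle_dec l a); [lra|].
    rewrite Rminus_eq_0, Rabs_R0; lra. }
  specialize (Hw l Hl Hcont).
  rewrite Tunit in Hw by auto.
  assert (HHl : H l = c) by (unfold H; destruct (Rle_dec l a); lra).
  rewrite HHl in Hw.
  destruct (Hw (c - (1 - l))) as [N HN]; [unfold c; lra|].
  specialize (HN N (le_n _)). unfold Rdist in HN. apply Rabs_def2 in HN.
  assert (Hle1 : tau H (G N) l <= tau (nu q) (G N) l).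
  { apply Tmono; auto. unfold G; auto. intro x. unfold H.
    destruct (Rle_dec x a). apply HF01. apply HFm; lra. }
  assert (Hle2 : tau (nu q) (G N) l <= nu (rs N) l).
  { unfold G. pose proof (HN3 q (rs N - q) l) as K.
    replace (q + (rs N - q)) with (rs N) in K by ring. exact K. }
  destruct (Hrs N) as [_ Hr2]. unfold c in *. lra.
Qed.

Lemma nbd_euclid (l : R) : 0 < l -> exists delta, 0 < delta /\
  forall x, Rabs x < delta -> nu x l > 1 - l.
Proof.
  destruct HPN as [_ [_ [_ [_ [_ [HD [HN1 [HN2 [HN3 _]]]]]]]]].
  destruct HTVS as [_ Hsc]. intros Hl.
  set (W := fun x => nu x l > 1 - l).
  assert (HW : strong_open nu W).
  { intros p Hp. destruct (nbd_open p l Hl Hp) as [eta [Heta Hr]].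
    exists eta; split; auto. }
  assert (HW0 : W (0 * 1)).
  { unfold W. rewrite Rmult_0_l. assert (E : dfeq (nu 0) eps0) by (apply HN1; auto).
    rewrite E. unfold eps0. destruct (Rle_dec l 0); lra. }
  destruct (Hsc W HW 0 1 HW0) as [A [B [HA [_ [HA0 [HB1 HAB]]]]]].
  destruct (HA 0 HA0) as [e [He HAe]]. exists e; split; auto.
  intros x Hx. pose proof (HAB x 1 (HAe x ltac:(rewrite Rminus_0_r; auto)) HB1) as K.
  unfold W in K. rewrite Rmult_1_r in K. exact K.
Qed.

Lemma T1 (e : R) : e <> 0 -> exists l, 0 < l /\ nu e l <= 1 - l.
Proof.
  destruct HPN as [_ [_ [_ [_ [_ [HD [HN1 _]]]]]]].
  intros Hne. apply NNPP; intro Hn. apply Hne. apply HN1.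
  assert (Hall : forall l, 0 < l -> nu e l > 1 - l).
  { intros l Hl. apply Rnot_le_gt. intro K. apply Hn. exists l; auto. }
  destruct (HD e) as [H01 [Hm [_ H0]]].
  intro x. unfold eps0. destruct (Rle_dec x 0) as [Hx|Hx].
  - pose proof (Hm x 0 Hx). pose proof (H01 x). lra.
  - pose proof (H01 x). destruct (Rle_dec 1 (nu e x)) as [K|K]; [lra|].
    exfalso. set (l := Rmin x (1 - nu e x)).
    assert (Hl1 : l <= x) by apply Rmin_l.
    assert (Hl2 : l <= 1 - nu e x) by apply Rmin_r.
    assert (Hl0 : 0 < l) by (apply Rmin_glb_lt; lra).
    pose proof (Hall l Hl0). pose proof (Hm l x Hl1). lra.
Qed.

Lemma euclid_nbd (eps : R) : 0 < eps -> exists l, 0 < l /\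
  forall q, nu q l > 1 - l -> Rabs q < eps.
Proof.
  intros Heps.
  pose proof HPN as [_ [_ [_ [_ [_ [HD [HN1 [HN2 _]]]]]]]].
  destruct HTVS as [_ Hsc].
  set (W := fun x : R => x <> 1).
  assert (HW : strong_open nu W).
  { intros p Hp. destruct (T1 (p - 1)) as [l [Hl Hl']]. unfold W in Hp; lra.
    exists l; split; auto. intros q Hq. intro E. unfold Nbd in Hq. rewrite E in Hq. lra. }
  destruct (Hsc W HW 0 0 ltac:(unfold W; rewrite Rmult_0_l; lra))
    as [A [B [HA [HB [HA0 [HB0 HAB]]]]]].
  destruct (HA 0 HA0) as [d [Hd HAd]].
  assert (HBb : forall b, B b -> Rabs b <= / d).
  { intros b Hb. destruct (Rle_dec (Rabs b) (/ d)) as [K|K]; auto. exfalso.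
    assert (Hb0 : b <> 0). { intro E; rewrite E, Rabs_R0 in K. pose proof (Rinv_0_lt_compat d Hd). lra. }
    apply (HAB (/ b) b); auto.
    - apply HAd. rewrite Rminus_0_r, Rabs_inv.
      assert (0 < Rabs b) by (apply Rabs_pos_lt; auto).
      replace d with (/ / d) by (field; lra).
      apply Rinv_lt_contravar; [|lra]. apply Rmult_lt_0_compat; auto. apply Rinv_0_lt_compat; lra.
    - field; auto. }
  set (c := 2 / (d * eps)).
  assert (Hc : 0 < c) by (unfold c; apply Rdiv_lt_0_compat; [lra| apply Rmult_lt_0_compat; lra]).
  destruct (Hsc B HB c 0 ltac:(rewrite Rmult_0_r; auto)) as [A' [B' [_ [HB' [HA'c [HB'0 HAB']]]]]].
  destruct (HB' 0 HB'0) as [l [Hl HN]]. exists l; split; auto.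
  intros q Hq. assert (Hq' : B' q).
  { apply HN. unfold Nbd. rewrite Rminus_0_l, HN2. auto. }
  pose proof (HBb _ (HAB' c q HA'c Hq')) as K.
  rewrite Rabs_mult, (Rabs_pos_eq c) in K by lra.
  assert (Rabs q <= / d / c).
  { apply (Rmult_le_reg_l c); auto. replace (c * (/ d / c)) with (/ d) by (field; lra). lra. }
  replace (/ d / c) with (eps / 2) in H by (unfold c; field; lra). lra.
Qed.

End S.

Theorem theorem14 (nu : R -> dfun) (tau taus : dfun -> dfun -> dfun) :
  PN_space_R nu tau taus -> strong_TVS nu -> strongly_complete nu.
Proof.
  intros HPN HTVS u Hu.
  assert (Hcc : Cauchy_crit u).
  { intros eps Heps. destruct (euclid_nbd nu tau taus HPN HTVS eps Heps) as [l [Hl Hq]].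
    destruct (Hu l Hl) as [N HN]. exists (S N). intros n m Hn Hm.
    unfold Rdist. apply Hq. apply HN; lia. }
  destruct (R_complete u Hcc) as [p Hp]. exists p.
  intros l Hl. destruct (nbd_euclid nu tau taus HPN HTVS l Hl) as [d [Hd Hx]].
  destruct (Hp d Hd) as [N HN]. exists N. intros n Hn.
  unfold Nbd. apply Hx. rewrite Rabs_minus_sym. apply HN. auto.
Qed.
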